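(* Let $I\subset\mathbb{R}$ be an open interval and let $x_1,x_2,\varphi:I\to\mathbb{R}$ be smooth functions such that the curve $\gamma(u)=(x_1(u),x_2(u),\cos\varphi(u),\sin\varphi(u))$ in $\mathbb{E}^4$ is parametrized by arclength, i.e. $(x_1')^2+(x_2')^2+(\varphi')^2=1$, and such that $1-(\varphi'(u))^2\neq 0$ for all $u\in I$. Let $M$ be the surface with position vector $$X(u,v)=\big(x_1(u),\,x_2(u),\,\cos\varphi(u)\cos v-\sin\varphi(u)\sin v,\,\cos\varphi(u)\sin v+\sin\varphi(u)\cos v\big).$$ Then $M$ is flat, i.e. its Gaussian curvature vanishes identically.
   Context: The first fundamental form coefficients are $E=\langle X_u,X_u\rangle$, $F=\langle X_u,X_v\rangle$, $G=\langle X_v,X_v\rangle$, and regularity means $W^2=EG-F^2\neq 0$. The Gaussian curvature is that of the induced metric. *)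

(* Defs.v *)
From Stdlib Require Import Reals.
From Coquelicot Require Import Coquelicot.
Open Scope R_scope.

Definition in_open_interval (a b : Rbar) (u : R) : Prop :=
  Rbar_lt a u /\ Rbar_lt u b.

Definition smooth_on (I : R -> Prop) (f : R -> R) : Prop :=
  forall (n : nat) (u : R), I u -> ex_derive_n f n u.

Definition pu (f : R -> R -> R) (u v : R) : R := Derive (fun s => f s v) u.
Definition pv (f : R -> R -> R) (u v : R) : R := Derive (fun t => f u t) v.

(* A parametrized surface in E^4, given by its 4 coordinate functions
   X 0, X 1, X 2, X 3. *)
Definition surface4 := nat -> R -> R -> R.

Definition coefE (X : surface4) (u v : R) : R :=
  sum_f_R0 (fun i => pu (X i) u v * pu (X i) u v) 3.
Definition coefF (X : surface4) (u v : R) : R :=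
  sum_f_R0 (fun i => pu (X i) u v * pv (X i) u v) 3.
Definition coefG (X : surface4) (u v : R) : R :=
  sum_f_R0 (fun i => pv (X i) u v * pv (X i) u v) 3.

Definition det3 (a11 a12 a13 a21 a22 a23 a31 a32 a33 : R) : R :=
  a11 * (a22 * a33 - a23 * a32)
  - a12 * (a21 * a33 - a23 * a31)
  + a13 * (a21 * a32 - a22 * a31).

(* Gaussian curvature of the induced metric E du^2 + 2F du dv + G dv^2,
   via Brioschi's formula (intrinsic curvature expressed in E, F, G and
   their partial derivatives up to order 2). *)
Definition gauss_curv (X : surface4) (u v : R) : R :=
  let E := coefE X in
  let F := coefF X in
  let G := coefG X in
  let Eu := pu E u v in let Ev := pv E u v in
  let Fu := pu F u v in let Fv := pv F u v in
  let Gu := pu G u v in let Gv := pv G u v in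
  let Evv := pv (pv E) u v in
  let Fuv := pv (pu F) u v in
  let Guu := pu (pu G) u v in
  let e := E u v in let f := F u v in let g := G u v in
  (det3 (- Evv / 2 + Fuv - Guu / 2) (Eu / 2) (Fu - Ev / 2)
        (Fv - Gu / 2) e f
        (Gv / 2) f g
   - det3 0 (Ev / 2) (Gu / 2)
          (Ev / 2) e f
          (Gu / 2) f g)
  / (e * g - f * f) ^ 2.

Definition rot_surface (x1 x2 phi : R -> R) : surface4 :=
  fun i u v =>
    match i with
    | 0%nat => x1 u
    | 1%nat => x2 u
    | 2%nat => cos (phi u) * cos v - sin (phi u) * sin v
    | _ => cos (phi u) * sin v + sin (phi u) * cos v
    end.

(* Main.v *)
Require Import Defs.
From Stdlib Require Import Reals Lra.
From Coquelicot Require Import Coquelicot.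
Open Scope R_scope.

Section H.
Variables x1 x2 phi : R -> R.
Local Notation X := (rot_surface x1 x2 phi).

Lemma pu2 s t : ex_derive phi s ->
  pu (X 2%nat) s t = - Derive phi s * (sin (phi s) * cos t + cos (phi s) * sin t).
Proof.
  intro H. unfold pu, rot_surface. apply is_derive_unique.
  destruct H as [l Hl]. rewrite (is_derive_unique _ _ _ Hl).
  auto_derive. repeat split; eexists; exact Hl.
  replace (Derive (fun x => phi x) s) with l by (symmetry; apply is_derive_unique; exact Hl).
  ring.
Qed.

Lemma pu3 s t : ex_derive phi s ->
  pu (X 3%nat) s t = Derive phi s * (cos (phi s) * cos t - sin (phi s) * sin t).
Proof.
  intro H. unfold pu, rot_surface. apply is_derive_unique.
  destruct H as [l Hl]. rewrite (is_derive_unique _ _ _ Hl).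
  auto_derive. repeat split; eexists; exact Hl.
  replace (Derive (fun x => phi x) s) with l by (symmetry; apply is_derive_unique; exact Hl).
  ring.
Qed.

Lemma pv2 s t : pv (X 2%nat) s t = - (cos (phi s) * sin t) - sin (phi s) * cos t.
Proof. unfold pv, rot_surface. apply is_derive_unique. auto_derive; auto; ring. Qed.

Lemma pv3 s t : pv (X 3%nat) s t = cos (phi s) * cos t - sin (phi s) * sin t.
Proof. unfold pv, rot_surface. apply is_derive_unique. auto_derive; auto; ring. Qed.

Lemma pv0 s t : pv (X 0%nat) s t = 0.
Proof. unfold pv, rot_surface. apply Derive_const. Qed.
Lemma pv1 s t : pv (X 1%nat) s t = 0.
Proof. unfold pv, rot_surface. apply Derive_const. Qed.
Lemma pu0 s t : pu (X 0%nat) s t = Derive x1 s.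
Proof. reflexivity. Qed.
Lemma pu1 s t : pu (X 1%nat) s t = Derive x2 s.
Proof. reflexivity. Qed.

Lemma Gval s t : coefG X s t = 1.
Proof.
  unfold coefG. simpl. rewrite pv0, pv1, pv2, pv3.
  pose proof (sin2_cos2 (phi s)). pose proof (sin2_cos2 t). unfold Rsqr in *. nra.
Qed.

Lemma Eval s t : ex_derive phi s ->
  Derive x1 s ^ 2 + Derive x2 s ^ 2 + Derive phi s ^ 2 = 1 -> coefE X s t = 1.
Proof.
  intros H1 H2. unfold coefE. simpl. rewrite pu0, pu1, (pu2 _ _ H1), (pu3 _ _ H1).
  pose proof (sin2_cos2 (phi s)). pose proof (sin2_cos2 t). unfold Rsqr in *.
  rewrite <- H2. set (c := cos (phi s)) in *. set (sn := sin (phi s)) in *.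
  set (ct := cos t) in *. set (st := sin t) in *.
  replace ((sn * ct + c * st) * (sn * ct + c * st) + (c * ct - sn * st) * (c * ct - sn * st))
    with ((sn*sn + c*c) * (st*st+ct*ct)) by ring.
  transitivity (Derive x1 s ^ 2 + Derive x2 s ^ 2 + Derive phi s ^ 2 *
    ((sn * ct + c * st) * (sn * ct + c * st) + (c * ct - sn * st) * (c * ct - sn * st))).
  ring.
  replace ((sn * ct + c * st) * (sn * ct + c * st) + (c * ct - sn * st) * (c * ct - sn * st))
    with ((sn*sn + c*c) * (st*st+ct*ct)) by ring.
  rewrite H, H0. ring.
Qed.

Lemma Fval s t : ex_derive phi s -> coefF X s t = Derive phi s.
Proof.
  intros H1. unfold coefF. simpl. rewrite pu0, pu1, (pu2 _ _ H1), (pu3 _ _ H1), pv0, pv1, pv2, pv3.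
  pose proof (sin2_cos2 (phi s)). pose proof (sin2_cos2 t). unfold Rsqr in *.
  set (c := cos (phi s)) in *. set (sn := sin (phi s)) in *.
  set (ct := cos t) in *. set (st := sin t) in *.
  transitivity (Derive phi s * ((sn*sn + c*c) * (st*st+ct*ct))). ring.
  rewrite H, H0. ring.
Qed.
End H.

Theorem proposition1 (a b : Rbar) (x1 x2 phi : R -> R) :
  Rbar_lt a b ->
  smooth_on (in_open_interval a b) x1 ->
  smooth_on (in_open_interval a b) x2 ->
  smooth_on (in_open_interval a b) phi ->
  (forall u, in_open_interval a b u ->
     (Derive x1 u) ^ 2 + (Derive x2 u) ^ 2 + (Derive phi u) ^ 2 = 1) ->
  (forall u, in_open_interval a b u -> 1 - (Derive phi u) ^ 2 <> 0) ->
  forall u v : R, in_open_interval a b u ->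
    gauss_curv (rot_surface x1 x2 phi) u v = 0.
Proof.
  intros _ _ _ Hp Har _ u v Hu.
  set (X := rot_surface x1 x2 phi).
  assert (Hd : forall s, in_open_interval a b s -> ex_derive phi s).
  { intros s Hs. exact (Hp 1%nat s Hs). }
  assert (Hloc : locally u (in_open_interval a b)).
  { apply (@open_and R_UniformSpace (fun s : R => Rbar_lt a s) (fun s : R => Rbar_lt s b)
      (open_Rbar_gt a) (open_Rbar_lt b)). exact Hu. }
  assert (HE : forall s t, in_open_interval a b s -> coefE X s t = 1).
  { intros s t Hs. apply Eval; auto. }
  assert (HF : forall s t, in_open_interval a b s -> coefF X s t = Derive phi s).
  { intros s t Hs. apply Fval; auto. }
  assert (Eu : pu (coefE X) u v = 0).
  { unfold pu. rewrite (Derive_ext_loc _ (fun _ => 1)). apply Derive_const.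
    eapply filter_imp; [|exact Hloc]. intros s Hs; simpl; auto. }
  assert (Ev : forall t, pv (coefE X) u t = 0).
  { intro t. unfold pv. rewrite (Derive_ext _ (fun _ => 1)). apply Derive_const.
    intros; auto. }
  assert (Evv : pv (pv (coefE X)) u v = 0).
  { unfold pv at 1. rewrite (Derive_ext _ (fun _ => 0)). apply Derive_const. exact Ev. }
  assert (Fv : pv (coefF X) u v = 0).
  { unfold pv. rewrite (Derive_ext _ (fun _ => Derive phi u)). apply Derive_const.
    intros; auto. }
  assert (Fuv : pv (pu (coefF X)) u v = 0).
  { unfold pv. rewrite (Derive_ext _ (fun _ => pu (coefF X) u 0)). apply Derive_const.
    intro t. unfold pu. apply Derive_ext_loc.
    eapply filter_imp; [|exact Hloc]. intros s Hs; simpl. rewrite !HF; auto. }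
  assert (Gu : forall s t, pu (coefG X) s t = 0).
  { intros s t. unfold pu. rewrite (Derive_ext _ (fun _ => 1)). apply Derive_const.
    intros; apply Gval. }
  assert (Gv : pv (coefG X) u v = 0).
  { unfold pv. rewrite (Derive_ext _ (fun _ => 1)). apply Derive_const.
    intros; apply Gval. }
  assert (Guu : pu (pu (coefG X)) u v = 0).
  { unfold pu at 1. rewrite (Derive_ext _ (fun _ => 0)). apply Derive_const.
    intro; apply Gu. }
  unfold gauss_curv. fold X. rewrite Eu, Ev, Evv, Fv, Fuv, Gu, Gv, Guu.
  unfold det3. unfold Rdiv. ring.
Qed.
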